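(* Let $T$ and $P$ be countably infinite sets and $R_{T.P}=\mathbf{R}^{(T^P)}=\prod_{p\in P}\mathbf{R}^T$. Let $\mathbf{L}:\prod_{p\in P}\bar{\mathbf{R}}^T\to\mathcal{N}(P)$ be any function; for each $p\in P$ let $L^p:\bar{\mathbf{R}}^T\to\mathcal{N}(T)$ be any function, and for each $t\in T$, $p\in P$ let $\delta^p_t:\bar{\mathbf{R}}\to\,]0,\infty[$ be a gauge in $\mathbf{R}$; put $\gamma^p=(L^p,\{\delta^p_t\}_{t\in T})$ and $\gamma=(\mathbf{L},\{\gamma^p\}_{p\in P},\{\delta^p_t\}_{t\in T,p\in P})$. Then there exists a $\gamma$-fine division of $R_{T.P}$.
   Context: $\mathcal{N}(X)$ is the family of finite subsets of a set $X$. A cell of $\mathbf{R}$ is $]u,v]$ ($u<v$ real), $]-\infty,v]$, or $]u,\infty[$; $y\in\bar{\mathbf{R}}=[-\infty,\infty]$ is associated with $I$ if $y$ is a vertex of $I$; for a gauge $\delta$ in $\mathbf{R}$, an associated $(y,I)$ is $\delta$-fine if: $I$ bounded and $|I|<\delta(y)$; or $y=-\infty$, $I=\,]-\infty,v]$, $v<-1/\delta(y)$; or $y=+\infty$, $I=\,]u,\infty[$, $u>1/\delta(y)$. Points of $R_{T.P}$ are $\mathbf{x}=((x^p_t)_{t\in T})_{p\in P}$, with tags in $\prod_{p}\bar{\mathbf{R}}^T$; write $x^p_T=(x^p_t)_{t\in T}$. A cell of $R_{T.P}$ is $\mathbf{I}=\prod_{p\in N_P}\big(\prod_{t\in N^p_T}I^p_t\times\mathbf{R}^{T\setminus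 N^p_T}\big)\times\prod_{p\in P\setminus N_P}\mathbf{R}^T$, where $N_P\in\mathcal{N}(P)$, for each $p\in N_P$ a set $N^p_T\in\mathcal{N}(T)$ is chosen, and each $I^p_t$ is a cell of $\mathbf{R}$. $(\mathbf{x},\mathbf{I})$ is associated if $x^p_t$ is a vertex of $I^p_t$ for all $p\in N_P$, $t\in N^p_T$. It is $\gamma$-fine if (1) $N_P\supseteq\mathbf{L}(\mathbf{x})$, (2) $N^p_T\supseteq L^p(x^p_T)$ for each $p\in N_P$, and (3) $(x^p_t,I^p_t)$ is $\delta^p_t$-fine for every $p\in N_P$ and $t\in N^p_T$. A division of $R_{T.P}$ is a finite collection of associated pairs whose cells are pairwise disjoint with union $R_{T.P}$; it is $\gamma$-fine if every pair is. *)

(* Defs.v *)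
From Stdlib Require Import Reals List.
Import ListNotations.
Open Scope R_scope.

Inductive Rbar : Type := Fin (r : R) | PInf | NInf.

(* Cells of R: ]u,v] (u<v), ]-oo,v], ]u,+oo[. *)
Inductive cellR : Type :=
  | Ioc (u v : R)
  | Iinf (v : R)
  | Isup (u : R).

Definition cellR_ok (I : cellR) : Prop :=
  match I with Ioc u v => u < v | _ => True end.

Definition in_cellR (r : R) (I : cellR) : Prop :=
  match I with
  | Ioc u v => u < r /\ r <= v
  | Iinf v => r <= v
  | Isup u => u < r
  end.

Definition vertexR (y : Rbar) (I : cellR) : Prop :=
  match I with
  | Ioc u v => y = Fin u \/ y = Fin v
  | Iinf v => y = NInf \/ y = Fin v
  | Isup u => y = Fin u \/ y = PInf
  end.

Definition fineR (delta : Rbar -> R) (y : Rbar) (I : cellR) : Prop :=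
  match I with
  | Ioc u v => v - u < delta y
  | Iinf v => y = NInf /\ v < - / delta y
  | Isup u => y = PInf /\ u > / delta y
  end.

(* Cells of R_{T.P} = prod_{p in P} R^T :
   I = prod_{p in NP} (prod_{t in NT p} Ic p t x R^{T \ NT p}) x prod_{p notin NP} R^T. *)
Record cellTP (T P : Type) : Type := mkCellTP {
  cNP : list P;
  cNT : P -> list T;
  cI  : P -> T -> cellR
}.
Arguments cNP {T P}. Arguments cNT {T P}. Arguments cI {T P}.

Definition cellTP_ok {T P} (I : cellTP T P) : Prop :=
  forall p t, In p (cNP I) -> In t (cNT I p) -> cellR_ok (cI I p t).

Definition in_cellTP {T P} (x : P -> T -> R) (I : cellTP T P) : Prop :=
  forall p t, In p (cNP I) -> In t (cNT I p) -> in_cellR (x p t) (cI I p t).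

Definition assocTP {T P} (x : P -> T -> Rbar) (I : cellTP T P) : Prop :=
  forall p t, In p (cNP I) -> In t (cNT I p) -> vertexR (x p t) (cI I p t).

Definition gamma_fine {T P}
    (L : (P -> T -> Rbar) -> list P)
    (Lp : P -> (T -> Rbar) -> list T)
    (delta : P -> T -> Rbar -> R)
    (x : P -> T -> Rbar) (I : cellTP T P) : Prop :=
  incl (L x) (cNP I) /\
  (forall p, In p (cNP I) -> incl (Lp p (x p)) (cNT I p)) /\
  (forall p t, In p (cNP I) -> In t (cNT I p) -> fineR (delta p t) (x p t) (cI I p t)).

Definition divisionTP {T P} (D : list ((P -> T -> Rbar) * cellTP T P)) : Prop :=
  (forall xI, In xI D -> cellTP_ok (snd xI) /\ assocTP (fst xI) (snd xI)) /\
  (forall i j, (i < length D)%nat -> (j < length D)%nat -> i <> j ->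
     forall d (z : P -> T -> R),
       in_cellTP z (snd (nth i D d)) -> in_cellTP z (snd (nth j D d)) -> False) /\
  (forall z : P -> T -> R, exists xI, In xI D /\ in_cellTP z (snd xI)).

Definition countably_infinite (X : Type) : Prop :=
  exists f : nat -> X, (forall a b, f a = f b -> a = b) /\ (forall x, exists n, f n = x).

(* Main.v *)
Require Import Defs.
From Stdlib Require Import Reals List.
From Stdlib Require Import Lra Lia Classical ClassicalEpsilon.
Import ListNotations.
Open Scope R_scope.

Section Generic.
Variables (Z C : Type) (inC : Z -> C -> Prop) (okC : C -> Prop).

Definition disjC (a b : C) : Prop := forall z, inC z a -> inC z b -> False.

Definition GoodG (Rg : Z -> Prop) : Prop :=
  exists D : list C, (forall c, In c D -> okC c) /\ ForallOrdPairs disjC D /\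
    (forall z, Rg z <-> exists c, In c D /\ inC z c).

Lemma GoodG_ext (R1 R2 : Z -> Prop) : (forall z, R1 z <-> R2 z) -> GoodG R1 -> GoodG R2.
Proof.
  intros H [D [H1 [H2 H3]]]. exists D. split; [exact H1|split; [exact H2|]].
  intros z. rewrite <- H. apply H3.
Qed.

Lemma FOP_app {X} (Rl : X -> X -> Prop) l1 l2 :
  ForallOrdPairs Rl l1 -> ForallOrdPairs Rl l2 ->
  (forall a b, In a l1 -> In b l2 -> Rl a b) -> ForallOrdPairs Rl (l1 ++ l2).
Proof.
  induction l1 as [|a l1 IH]; intros H1 H2 H; simpl; auto.
  inversion H1; subst. constructor.
  - apply Forall_app; split; auto. apply Forall_forall; intros b Hb; apply H; simpl; auto.
  - apply IH; auto. intros; apply H; simpl; auto.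
Qed.

Lemma GoodG_union2 (A B : Z -> Prop) : GoodG A -> GoodG B -> (forall z, A z -> B z -> False) ->
  GoodG (fun z => A z \/ B z).
Proof.
  intros [D1 [O1 [F1 C1]]] [D2 [O2 [F2 C2]]] Hd.
  exists (D1 ++ D2). split; [|split].
  - intros c Hc. apply in_app_or in Hc. destruct Hc; auto.
  - apply FOP_app; auto. intros a b Ha Hb z Hza Hzb.
    apply (Hd z); [apply C1 | apply C2]; eauto.
  - intros z. split.
    + intros [Hz|Hz]; [apply C1 in Hz|apply C2 in Hz]; destruct Hz as [c [Hc Hz]];
      exists c; split; auto; apply in_or_app; auto.
    + intros [c [Hc Hz]]. apply in_app_or in Hc. destruct Hc as [Hc|Hc];
      [left; apply C1|right; apply C2]; eauto.
Qed.

Lemma GoodG_empty : GoodG (fun _ => False).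
Proof.
  exists []. split; [intros c []|split; [constructor|]].
  intros z; split; [intros []|intros [c [[] _]]].
Qed.

Lemma GoodG_single c : okC c -> GoodG (fun z => inC z c).
Proof.
  intros H. exists [c]. split; [intros c' [<-|[]]; auto|split].
  - constructor; constructor.
  - intros z; split; [intros Hz; exists c; simpl; auto|intros [c' [[<-|[]] Hz]]; auto].
Qed.

Lemma GoodG_split {A} (reg : A -> Z -> Prop) (l : list A) (Rg : Z -> Prop) :
  ForallOrdPairs (fun a b => forall z, reg a z -> reg b z -> False) l ->
  (forall z, exists a, In a l /\ reg a z) ->
  (forall a, In a l -> GoodG (fun z => Rg z /\ reg a z)) -> GoodG Rg.
Proof.
  intros Hd Hc Hg.
  assert (H : GoodG (fun z => Rg z /\ exists a, In a l /\ reg a z)).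
  { clear Hc. induction l as [|a l IH].
    - apply (GoodG_ext (fun _ => False)); [|apply GoodG_empty].
      intros z; split; [tauto|intros [_ [a [[] _]]]].
    - inversion Hd; subst.
      apply (GoodG_ext (fun z => (Rg z /\ reg a z) \/ (Rg z /\ exists b, In b l /\ reg b z))).
      + intros z; simpl; split.
        * intros [[H3 H4]|[H3 [b [H4 H5]]]]; split; eauto.
        * intros [H3 [b [[<-|H4] H5]]]; eauto.
      + apply GoodG_union2.
        * apply Hg; simpl; auto.
        * apply IH; auto. intros; apply Hg; simpl; auto.
        * intros z [_ Ha] [_ [b [Hb Hbz]]]. rewrite Forall_forall in H1. eapply H1; eauto. }
  apply (GoodG_ext _ _ (fun z => conj (fun h => proj1 h) (fun h => conj h (Hc z))) H).
Qed.

Lemma konig {A} (a0 : A) (pieces : nat -> list A) (reg : nat -> A -> Z -> Prop) :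
  (forall k Rg, (forall a, In a (pieces k) -> GoodG (fun z => Rg z /\ reg k a z)) -> GoodG Rg) ->
  (forall c : nat -> A, (forall k, In (c k) (pieces k)) ->
     exists m, GoodG (fun z => forall k, (k < m)%nat -> reg k (c k) z)) ->
  GoodG (fun _ => True).
Proof.
  intros Hs Hb. apply NNPP; intro H0.
  set (choose := fun k (Rg : Z -> Prop) => epsilon (inhabits a0)
       (fun a => In a (pieces k) /\ ~ GoodG (fun z => Rg z /\ reg k a z))).
  set (seqR := nat_rect (fun _ => Z -> Prop) (fun _ => True)
        (fun k Rk => fun z => Rk z /\ reg k (choose k Rk) z)).
  set (c := fun k => choose k (seqR k)).
  assert (Hex : forall k, ~ GoodG (seqR k) ->
     In (c k) (pieces k) /\ ~ GoodG (fun z => seqR k z /\ reg k (c k) z)).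
  { intros k Hk. unfold c, choose. apply (epsilon_spec (inhabits a0)
       (fun a => In a (pieces k) /\ ~ GoodG (fun z => seqR k z /\ reg k a z))).
    apply NNPP; intro Hn. apply Hk. apply (Hs k). intros a Ha.
    apply NNPP; intro Hn2. apply Hn. exists a; auto. }
  assert (Hbad : forall k, ~ GoodG (seqR k)).
  { induction k as [|k IH]; [exact H0|]. exact (proj2 (Hex k IH)). }
  destruct (Hb c (fun k => proj1 (Hex k (Hbad k)))) as [m Hm].
  apply (Hbad m). revert Hm. apply GoodG_ext.
  induction m as [|m IH]; intros z.
  - simpl. split; auto. intros _ k Hk. lia.
  - change (seqR (S m) z) with (seqR m z /\ reg m (c m) z).
    rewrite <- IH. split.
    + intros H; split; [intros k Hk; apply H; lia|apply H; lia].
    + intros [H1 H2] k Hk. destruct (Nat.eq_dec k m) as [->|Hne]; auto. apply H1; lia.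
Qed.

End Generic.

Arguments GoodG {Z C} inC okC Rg.
Arguments disjC {Z C} inC a b.

Lemma FOP_impl {X} (R1 R2 : X -> X -> Prop) l :
  (forall a b, R1 a b -> R2 a b) -> ForallOrdPairs R1 l -> ForallOrdPairs R2 l.
Proof.
  intros H HF. induction HF; constructor; auto.
  eapply Forall_impl; [|eassumption]. auto.
Qed.

Lemma FOP_nth {X} (Rl : X -> X -> Prop) l d :
  ForallOrdPairs Rl l -> (forall a b, Rl a b -> Rl b a) ->
  forall i j, (i < length l)%nat -> (j < length l)%nat -> i <> j -> Rl (nth i l d) (nth j l d).
Proof.
  intros HF Hsym. induction HF as [|a l Ha HF IH]; intros i j Hi Hj Hij; simpl in *; [lia|].
  rewrite Forall_forall in Ha.
  destruct i as [|i]; destruct j as [|j].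
  - lia.
  - apply Ha. apply nth_In. lia.
  - apply Hsym, Ha. apply nth_In. lia.
  - apply IH; lia.
Qed.

Lemma le_list_max {X} (g : X -> nat) l x : In x l -> (g x <= list_max (map g l))%nat.
Proof.
  intros H. assert (H' := proj1 (list_max_le (map g l) _) (le_n _)).
  rewrite Forall_forall in H'. apply H'. apply in_map. auto.
Qed.

Definition inC1 (r : R) (c : Rbar * cellR) := in_cellR r (snd c).
Definition okC1 (d : Rbar -> R) (c : Rbar*cellR) :=
  cellR_ok (snd c) /\ vertexR (fst c) (snd c) /\ fineR d (fst c) (snd c).

Lemma cousin1 (d : Rbar -> R) (Hd : forall y, 0 < d y) : GoodG inC1 (okC1 d) (fun _ => True).
Proof.
  set (S := fun b => GoodG inC1 (okC1 d) (fun r => r <= b)).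
  assert (Hne : S (- / d NInf - 1)).
  { unfold S. apply (GoodG_ext _ _ _ _ (fun r => inC1 r (NInf, Iinf (- / d NInf - 1)))).
    - intros z; unfold inC1; simpl; tauto.
    - apply GoodG_single. unfold okC1; simpl. repeat split; auto. lra. }
  assert (Hext : forall b c y, S b -> b < c -> okC1 d (y, Ioc b c) -> S c).
  { intros b c y Sb Hbc Hok. unfold S.
    apply (GoodG_ext _ _ _ _ (fun r => r <= b \/ inC1 r (y, Ioc b c))).
    - intros z; unfold inC1; simpl; split.
      + intros [H|H]; lra.
      + intros H. destruct (Rle_dec z b); [left|right]; lra.
    - apply GoodG_union2; auto.
      + apply GoodG_single; auto.
      + intros z; unfold inC1; simpl; lra. }
  assert (Hunb : forall M, exists b, S b /\ M < b).
  { intros M. apply NNPP; intro HM.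
    assert (Hbd : bound S).
    { exists M. intros b Hb. apply Rnot_lt_le. intro Hlt. apply HM. exists b; split; auto. }
    destruct (completeness S Hbd (ex_intro _ _ Hne)) as [c [Hub Hlub]].
    set (e := d (Fin c)). assert (He : 0 < e) by apply Hd.
    assert (Hb : exists b, S b /\ c - e < b).
    { apply NNPP; intro Hn. assert (c <= c - e); [|lra]. apply Hlub. intros b Hb.
      apply Rnot_lt_le; intro Hlt; apply Hn; exists b; split; auto. }
    destruct Hb as [b [Sb Hbc]].
    assert (Sc : S c).
    { destruct (Rle_lt_dec c b).
      - assert (b <= c) by (apply Hub; auto). replace c with b by lra; auto.
      - apply (Hext b c (Fin c)); auto. unfold okC1; simpl; split; [lra|split; [right; reflexivity|]].
        unfold e in Hbc. lra. }
    assert (S (c + e/2)).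
    { apply (Hext c _ (Fin c)); auto; [lra|]. unfold okC1; simpl; split; [lra|split; [left; reflexivity|]].
      fold e. lra. }
    assert (c + e/2 <= c) by (apply Hub; auto). lra. }
  destruct (Hunb (/ d PInf)) as [b [Sb Hb]].
  apply (GoodG_ext _ _ _ _ (fun r => r <= b \/ inC1 r (PInf, Isup b))).
  - intros z; unfold inC1; simpl; split; auto. intros _.
    destruct (Rle_dec z b); [left|right]; lra.
  - apply GoodG_union2; auto.
    + apply GoodG_single. unfold okC1; simpl; repeat split; auto.
    + intros z; unfold inC1; simpl; lra.
Qed.

Section Inner.
Variables (T : Type) (fT : nat -> T) (gT : T -> nat)
  (HfT : forall t, fT (gT t) = t) (HgT : forall k, gT (fT k) = k)
  (Lpp : (T -> Rbar) -> list T) (dp : T -> Rbar -> R) (Hdp : forall t y, 0 < dp t y).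

Definition inCI (z : T -> R) (c : (T -> Rbar) * (list T * (T -> cellR))) :=
  forall t, In t (fst (snd c)) -> in_cellR (z t) (snd (snd c) t).
Definition okCI (c : (T -> Rbar) * (list T * (T -> cellR))) :=
  (forall t, In t (fst (snd c)) -> okC1 (dp t) (fst c t, snd (snd c) t)) /\
  incl (Lpp (fst c)) (fst (snd c)).

Lemma in_map_seq t m : In t (map fT (seq 0 m)) <-> (gT t < m)%nat.
Proof.
  rewrite in_map_iff. split.
  - intros [k [<- Hk]]. rewrite HgT. apply in_seq in Hk. lia.
  - intros H. exists (gT t). split; auto. apply in_seq. lia.
Qed.

Lemma inner : GoodG inCI okCI (fun _ => True).
Proof.
  assert (Hp : forall k, {D : list (Rbar*cellR) |
    (forall c, In c D -> okC1 (dp (fT k)) c) /\ ForallOrdPairs (disjC inC1) D /\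
    (forall z, True <-> exists c, In c D /\ inC1 z c)}).
  { intros k. apply constructive_indefinite_description. apply cousin1. intros; apply Hdp. }
  apply (konig _ _ inCI okCI (NInf, Iinf 0) (fun k => proj1_sig (Hp k))
           (fun k a z => in_cellR (z (fT k)) (snd a))).
  - intros k Rg Hall.
    destruct (proj2_sig (Hp k)) as [Hok [Hd Hc]].
    apply (GoodG_split _ _ _ _ (fun a z => in_cellR (z (fT k)) (snd a)) (proj1_sig (Hp k))); auto.
    + eapply FOP_impl; [|exact Hd]. intros a b H z. apply H.
    + intros z. apply (Hc (z (fT k))). auto.
  - intros c Hc.
    set (xp := fun t => fst (c (gT t))).
    exists (S (list_max (map gT (Lpp xp)))).
    apply (GoodG_ext _ _ _ _ (fun z => inCI z (xp, (map fT (seq 0 (S (list_max (map gT (Lpp xp))))),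
                                                       fun t => snd (c (gT t)))))).
    + intros z. unfold inCI; cbn [fst snd]. split.
      * intros H k Hk. specialize (H (fT k)). rewrite HgT in H. apply H.
        apply in_map_seq. rewrite HgT. auto.
      * intros H t Ht. apply in_map_seq in Ht. rewrite <- (HfT t) at 1. apply H. auto.
    + apply GoodG_single. split; cbn [fst snd].
      * intros t Ht. apply in_map_seq in Ht. unfold xp. rewrite <- (HfT t) at 1.
        destruct (proj2_sig (Hp (gT t))) as [Hok _]. pose proof (Hok _ (Hc (gT t))) as H.
        destruct (c (gT t)); exact H.
      * intros t Ht. apply in_map_seq. apply le_list_max with (g := gT) in Ht. lia.
Qed.
End Inner.

Theorem theorem7 (T P : Type)
  (HT : countably_infinite T) (HP : countably_infinite P)
  (L : (P -> T -> Rbar) -> list P)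
  (Lp : P -> (T -> Rbar) -> list T)
  (delta : P -> T -> Rbar -> R)
  (Hdelta : forall p t y, 0 < delta p t y) :
  exists D : list ((P -> T -> Rbar) * cellTP T P),
    divisionTP D /\
    (forall xI, In xI D -> gamma_fine L Lp delta (fst xI) (snd xI)).
Proof.
  destruct HT as [fT [iT sT]]. destruct HP as [fP [iP sP]].
  set (gT := fun t => proj1_sig (constructive_indefinite_description _ (sT t))).
  assert (HfT : forall t, fT (gT t) = t).
  { intros t. unfold gT. exact (proj2_sig (constructive_indefinite_description _ (sT t))). }
  assert (HgT : forall k, gT (fT k) = k). { intros k. apply iT. apply HfT. }
  set (gP := fun t => proj1_sig (constructive_indefinite_description _ (sP t))).
  assert (HfP : forall t, fP (gP t) = t).
  { intros t. unfold gP. exact (proj2_sig (constructive_indefinite_description _ (sP t))). }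
  assert (HgP : forall k, gP (fP k) = k). { intros k. apply iP. apply HfP. }
  assert (Hp : forall k, {D : list ((T->Rbar)*(list T*(T->cellR))) |
     (forall c, In c D -> okCI T (Lp (fP k)) (delta (fP k)) c) /\
     ForallOrdPairs (disjC (inCI T)) D /\
     (forall z, True <-> exists c, In c D /\ inCI T z c)}).
  { intros k. apply constructive_indefinite_description.
    apply (inner T fT gT HfT HgT). intros; apply Hdelta. }
  set (inCO := fun z (c : (P -> T -> Rbar) * cellTP T P) => in_cellTP z (snd c)).
  set (okCO := fun (c : (P -> T -> Rbar) * cellTP T P) =>
     cellTP_ok (snd c) /\ assocTP (fst c) (snd c) /\ gamma_fine L Lp delta (fst c) (snd c)).
  assert (HG : GoodG inCO okCO (fun _ => True)).
  { apply (konig _ _ inCO okCO ((fun _ : T => NInf), (@nil T, fun _ : T => Iinf 0)) (fun k => proj1_sig (Hp k))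
           (fun k a z => inCI T (z (fP k)) a)).
    - intros k Rg Hall.
      destruct (proj2_sig (Hp k)) as [Hok [Hd Hc]].
      apply (GoodG_split _ _ _ _ (fun a z => inCI T (z (fP k)) a) (proj1_sig (Hp k))); auto.
      + eapply FOP_impl; [|exact Hd]. intros a b H z. apply H.
      + intros z. apply (Hc (z (fP k))). auto.
    - intros c Hc.
      assert (Hok : forall p, okCI T (Lp p) (delta p) (c (gP p))).
      { intros p. pose proof (proj1 (proj2_sig (Hp (gP p))) _ (Hc (gP p))) as H.
        rewrite HfP in H. exact H. }
      set (x := fun p => fst (c (gP p))).
      set (m := S (list_max (map gP (L x)))).
      set (cell := @mkCellTP T P (map fP (seq 0 m)) (fun p => fst (snd (c (gP p))))
                     (fun p => snd (snd (c (gP p))))).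
      exists m.
      apply (GoodG_ext _ _ _ _ (fun z => inCO z (x, cell))).
      + intros z. unfold inCO, in_cellTP, inCI; cbn [fst snd cNP cNT cI cell]. split.
        * intros H k Hk t Ht. specialize (H (fP k) t). rewrite HgP in H. apply H; auto.
          apply (in_map_seq P fP gP HfP HgP). rewrite HgP. auto.
        * intros H p t Hpp Ht. apply (in_map_seq P fP gP HfP HgP) in Hpp.
          pose proof (H (gP p) Hpp t Ht) as H'. rewrite HfP in H'. exact H'.
      + apply GoodG_single. unfold okCO; cbn [fst snd]. split; [|split].
        * intros p t _ Ht. exact (proj1 (proj1 (Hok p) t Ht)).
        * intros p t _ Ht. exact (proj1 (proj2 (proj1 (Hok p) t Ht))).
        * split; [|split].
          -- intros p Hpp. apply (in_map_seq P fP gP HfP HgP).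
             apply le_list_max with (g := gP) in Hpp. unfold m. lia.
          -- intros p _. exact (proj2 (Hok p)).
          -- intros p t _ Ht. exact (proj2 (proj2 (proj1 (Hok p) t Ht))). }
  destruct HG as [D [Hok [Hd Hc]]]. exists D. split.
  - split; [|split].
    + intros xI HxI. destruct (Hok _ HxI) as [H1 [H2 _]]. auto.
    + intros i j Hi Hj Hij d z H1 H2.
      apply (FOP_nth _ D d Hd) with (i := i) (j := j) (z := z); auto.
      intros a b H z' Ha Hb. exact (H z' Hb Ha).
    + intros z. destruct (proj1 (Hc z) I) as [c [H1 H2]]. exists c; auto.
  - intros xI HxI. apply (Hok _ HxI).
Qed.
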